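(* Consider units $j=1,\dots,N$ with $N=N_0+N_1$, partitioned into a set $\mathcal{J}_1$ of $N_1\ge 1$ treated units and a set $\mathcal{J}_0$ of $N_0$ control units, with treatment indicators $D_j=\mathbf{1}\{j\in\mathcal{J}_1\}$. Let $\{X_j\}_{j=1}^N$ be fixed (non-random) covariates. Potential outcomes satisfy $Y_j(0)=m(X_j)+\epsilon_j$ with $\mathbb{E}[\epsilon_j]=0$, where $m$ belongs to a class $\mathcal{M}$ of functions; observed outcomes are $Y_j=D_jY_j(1)+(1-D_j)Y_j(0)$ and $\tau_j=Y_j(1)-Y_j(0)$. Let $\hat m$ be an estimator of $m$ computed from the data, and let $$\hat\beta\in\operatorname{argmin}_{b\in\mathbb{R}}\frac1N\sum_{j=1}^N\big(Y_j-bD_j-\hat m(X_j)\big)^2 .$$ Fix $c\in\mathbb{R}$. Let $\tilde m$ be the estimator of $m$ computed imposing $\beta=c$, and define null-imposed residuals $\tilde e_j=Y_j-cD_j-\tilde m(X_j)$, $j=1,\dots,N$. For each $g=(g_1,\dots,g_N)\in\mathcal{G}_N:=\{-1,1\}^N$, define artificial outcomes $\check Y^g_j=cD_j+\tilde m(X_j)+g_j\tilde e_j$, let $\check m^g$ be the estimator of $m$ computed (by the same procedure) from the artificial data $\{\check Y_j^g,D_j,X_j\}_{j=1}^N$, and let $$\check\beta^g\in\operatorname{argmin}_{b\in\mathbb{R}}\frac1N\sum_{j=1}^N\big(\check Y^g_j-bD_j-\check m^g(X_j)\big)^2 .$$ Let $g^*_N=(g^*_1,\dots,g^*_N)\sim\mathrm{Uniform}(\mathcal{G}_N)$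 be drawn independently of $Y_1,\dots,Y_N$. All limits are as $N_0\to\infty$ with $N_1$ and $\mathcal{J}_1$ held fixed. Suppose (A1) $\max_{j\in\mathcal{J}_1}|\hat m(X_j)-m(X_j)|\overset{p}{\to}0$. Then $$\hat\beta-\frac1{N_1}\sum_{j\in\mathcal{J}_1}(\tau_j+\epsilon_j)\overset{p}{\to}0 .$$ If in addition (A2) $\max_{j\in\mathcal{J}_1}|\hat m(X_j)-\tilde m(X_j)|\overset{p}{\to}0$ and (A3) for every $\delta>0$, $\lim_{N_0\to\infty}\mathbb{P}\big[\max_{j\in\mathcal{J}_1}|\tilde m(X_j)-\check m^{g^*_N}(X_j)|>\delta\big]=0$, then $$\check\beta^{g^*_N}-c-\frac1{N_1}\sum_{j\in\mathcal{J}_1}g^*_j(\tau_j+\epsilon_j-c)\overset{p}{\to}0,$$ and this convergence also holds conditionally on the data: for every $\delta>0$, $$\mathbb{P}\Big[\Big|\check\beta^{g^*_N}-c-\frac1{N_1}\sum_{j\in\mathcal{J}_1}g^*_j(\tau_j+\epsilon_j-c)\Big|>\delta\ \Big|\ Y_1,\dots,Y_N\Big]\overset{p}{\to}0 .$$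
   Context: This is the setting of a wild bootstrap with the null hypothesis $\beta=c$ imposed, in a partially linear model $Y_j=\beta D_j+m(X_j)+e_j$, asymptotically with a fixed number of treated units and a growing number of controls. $\overset{p}{\to}$ denotes convergence in probability as $N_0\to\infty$. *)

(* Defs.v *)
From HB Require Import structures.
From mathcomp Require Import all_boot all_order all_algebra.
From mathcomp Require Import all_classical all_reals all_analysis.
Unset Printing Implicit Defensive.
Import Order.TTheory GRing.Theory Num.Theory.
Import numFieldNormedType.Exports.
Local Open Scope classical_set_scope.
Local Open Scope ring_scope.

(* Units are labelled by natural numbers k = 0,1,2,...; at stage n (n = N_0,
   the number of controls) the sample is units 0 .. N1+n-1, the treated set
   J_1 = {0,..,N1-1} (fixed), the controls are N1 .. N1+n-1. *)

Section Model.
Variable (R : realType) (T : Type) (Xt : Type) (N1 : nat).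

Definition Dind (k : nat) : R := if (k < N1)%N then 1 else 0.

Definition Y0 (m : Xt -> R) (X : nat -> Xt) (eps : nat -> T -> R) (k : nat)
  (w : T) : R := m (X k) + eps k w.

Definition tau (m : Xt -> R) (X : nat -> Xt) (eps Y1 : nat -> T -> R) (k : nat)
  (w : T) : R := Y1 k w - Y0 m X eps k w.

Definition Yobs (m : Xt -> R) (X : nat -> Xt) (eps Y1 : nat -> T -> R) (k : nat)
  (w : T) : R := Dind k * Y1 k w + (1 - Dind k) * Y0 m X eps k w.

Definition Ydata (m : Xt -> R) (X : nat -> Xt) (eps Y1 : nat -> T -> R) (n : nat)
  (w : T) : 'I_(N1 + n) -> R := fun j => Yobs m X eps Y1 j w.

Definition SSR (X : nat -> Xt) (n : nat) (y : 'I_(N1 + n) -> R) (mh : Xt -> R)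
  (b : R) : R :=
  (N1 + n)%:R^-1 * \sum_(j < N1 + n) (y j - b * Dind j - mh (X j)) ^+ 2.

Definition sgnb (b : bool) : R := if b then 1 else -1.

Definition Ycheck (X : nat -> Xt) (n : nat) (c : R) (y : 'I_(N1 + n) -> R)
  (mt : Xt -> R) (g : {ffun 'I_(N1 + n) -> bool}) : 'I_(N1 + n) -> R :=
  fun j => c * Dind j + mt (X j) + sgnb (g j) * (y j - c * Dind j - mt (X j)).

Definition maxJ1 (f : 'I_N1 -> R) : R := \big[Num.max/0]_(j < N1) f j.

(* Probability, with respect to g* ~ Uniform({-1,1}^N) only, of an event
   about g*.  Since g* is independent of the data, this is the conditional
   probability given the data. *)
Definition bootP (n : nat) (E : {ffun 'I_(N1 + n) -> bool} -> Prop) : R :=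
  #|[set g : {ffun 'I_(N1 + n) -> bool} | `[< E g >] ]|%:R / (2 ^ (N1 + n))%:R.
End Model.

Section Prob.
Context {d : measure_display} {T : measurableType d} {R : realType}.
Variable P : probability T R.

Definition cvg_prob0 (Z : nat -> T -> R) : Prop :=
  forall delta : R, 0 < delta ->
    (P [set w | delta < `|Z n w|]) @[n --> \oo] --> 0%E.

(* Probability of an event depending on the data w and on g* (independent,
   uniform on {-1,1}^N): joint law = P (x) Uniform, i.e.
   P[E] = E_P[ P*(E(w, .)) ]. *)
Definition jointP (N1 n : nat) (E : T -> {ffun 'I_(N1 + n) -> bool} -> Prop)
  : \bar R := (\int[P]_w (bootP R N1 n (E w))%:E)%E.
End Prob.

(* Main.v *)
Require Import Defs.
From HB Require Import structures.
From mathcomp Require Import all_boot all_order all_algebra.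
From mathcomp Require Import all_classical all_reals all_analysis.
From mathcomp Require Import ring lra measurable_realfun.
Import Order.TTheory GRing.Theory Num.Theory.
Import numFieldNormedType.Exports.
Local Open Scope classical_set_scope.
Local Open Scope ring_scope.



Section Alg.
Variables (R : realType) (N1 : nat).

Lemma Dind_l (j : 'I_N1) : Dind R N1 j = 1.
Proof. by rewrite /Dind ltn_ord. Qed.

Lemma Dind_r (i : nat) : Dind R N1 (N1 + i) = 0.
Proof. by rewrite /Dind ltnNge leq_addr. Qed.

Lemma sum_sq n (e : 'I_(N1 + n) -> R) b :
  \sum_(j < N1 + n) (e j - b * Dind R N1 j) ^+ 2 =
  \sum_(j < N1) e (lshift n j) ^+ 2 - 2 * b * \sum_(j < N1) e (lshift n j)
   + N1%:R * b ^+ 2 + \sum_(j < n) e (rshift N1 j) ^+ 2.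
Proof.
rewrite big_split_ord /=.
under eq_bigr => i _ do rewrite Dind_l.
under [in X in _ + X = _]eq_bigr => i _ do rewrite Dind_r mulr0 subr0.
congr (_ + _).
have -> : \sum_(i < N1) (e (lshift n i) - b * 1) ^+ 2 =
  \sum_(i < N1) (e (lshift n i) ^+ 2 - (2 * b) * e (lshift n i) + b ^+ 2).
  by apply: eq_bigr => i _; ring.
rewrite big_split /= sumrB -mulr_sumr sumr_const card_ord.
rewrite -mulr_natl. ring.
Qed.

Lemma argmin_mean n (e : 'I_(N1 + n) -> R) bs : (0 < N1)%N ->
  (forall b, \sum_(j < N1 + n) (e j - bs * Dind R N1 j) ^+ 2 <=
             \sum_(j < N1 + n) (e j - b * Dind R N1 j) ^+ 2) ->
  bs = N1%:R^-1 * \sum_(j < N1) e (lshift n j).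
Proof.
move=> N1p H.
set S := \sum_(j < N1) e (lshift n j).
set k : R := N1%:R.
have kp : 0 < k by rewrite ltr0n.
set b0 := k^-1 * S.
have Sk : S = k * b0 by rewrite /b0 mulrA divff ?gt_eqF // mul1r.
have := H b0; rewrite !sum_sq -/S Sk => h.
have h2 : k * (bs - b0) ^+ 2 <= 0 by lra.
have : (bs - b0) ^+ 2 <= 0.
  by rewrite -(pmulr_rle0 _ kp).
rewrite le_eqVlt ltNge sqr_ge0 orbF sqrf_eq0 subr_eq0 => /eqP.
by [].
Qed.
End Alg.



Section Max.
Variables (R : realType) (N1 : nat).

Lemma maxJ1_ge (f : 'I_N1 -> R) i : f i <= maxJ1 R N1 f.
Proof.
rewrite /maxJ1.
have : i \in index_enum 'I_N1 by rewrite mem_index_enum.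
elim: (index_enum _) => // a s IH; rewrite inE big_cons => /orP [/eqP<-|/IH h].
  by rewrite le_max lexx.
by rewrite le_max h orbT.
Qed.

Lemma maxJ1_ge0 (f : 'I_N1 -> R) : 0 <= maxJ1 R N1 f.
Proof.
rewrite /maxJ1; elim: (index_enum _) => [|a s IH]; first by rewrite big_nil.
by rewrite big_cons le_max IH orbT.
Qed.

Lemma avg_bound (f : 'I_N1 -> R) (M : R) : (0 < N1)%N -> (forall j, `|f j| <= M) ->
  `|N1%:R^-1 * \sum_(j < N1) f j| <= M.
Proof.
move=> N1p H.
have kp : 0 < (N1%:R : R) by rewrite ltr0n.
rewrite normrM normfV normr_nat mulrC ler_pdivrMr //.
apply: (le_trans (ler_norm_sum _ _ _)).
apply: (le_trans (ler_sum _ (fun j _ => H j))).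
by rewrite sumr_const card_ord mulr_natr.
Qed.
End Max.



Section Boot.
Variables (R : realType) (N1 n : nat).
Local Notation G := {ffun 'I_(N1 + n) -> bool}.

Lemma card_G : #|{: G}| = (2 ^ (N1 + n))%N.
Proof. by rewrite card_ffun card_bool card_ord. Qed.

Lemma pow2_gt0 : 0 < ((2 ^ (N1 + n))%N%:R : R).
Proof. by rewrite ltr0n expn_gt0. Qed.

Lemma bootP_ge0 (E : G -> Prop) : 0 <= bootP R N1 n E.
Proof. by rewrite /bootP divr_ge0 // ler0n. Qed.

Lemma bootP_le1 (E : G -> Prop) : bootP R N1 n E <= 1.
Proof.
rewrite /bootP ler_pdivrMr ?pow2_gt0 // mul1r ler_nat -card_G.
exact: max_card.
Qed.

Lemma bootP_sub (E E' : G -> Prop) (b : bool) :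
  (forall g, E g -> E' g \/ b) -> bootP R N1 n E <= bootP R N1 n E' + b%:R.
Proof.
move=> H; case: b H => H /=.
  by apply: (le_trans (bootP_le1 _)); rewrite lerDr bootP_ge0.
rewrite addr0 /bootP ler_pM2r ?invr_gt0 ?pow2_gt0 // ler_nat.
apply: subset_leq_card; apply/fintype.subsetP => g; rewrite !inE => /asboolP /H [h|//].
by apply/asboolP.
Qed.

Lemma bootP_sum (E : G -> Prop) : bootP R N1 n E =
  (\sum_(g : G) (\1_[set g | E g] g : R)) / (2 ^ (N1 + n))%:R.
Proof.
rewrite /bootP; congr (_ / _).
rewrite -sum1_card natr_sum big_mkcond /=; apply: eq_bigr => g _.
rewrite indicE /in_mem /mem /= /in_set asboolb; by case: asboolP.
Qed.
End Boot.



Section Meas.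
Context {d : measure_display} {T : measurableType d} {R : realType}.
Variable P : probability T R.

Lemma mset_lt (h : T -> R) (del : R) : measurable_fun setT h ->
  measurable [set w | del < h w].
Proof.
move=> mh.
have := measurable_fun_ltr (measurable_cst del) mh measurableT (Y := [set true]) I.
by rewrite setTI.
Qed.

Lemma measurable_maxJ1 N1 (f : T -> 'I_N1 -> R) :
  (forall j, measurable_fun setT (fun w => f w j)) ->
  measurable_fun setT (fun w => maxJ1 R N1 (f w)).
Proof.
move=> mf; rewrite /maxJ1; elim: (index_enum _) => [|a s IH].
  under eq_fun do rewrite big_nil; exact: measurable_cst.
under eq_fun do rewrite big_cons.
exact: measurable_maxr.
Qed.

Lemma measurable_bootP N1 n (E : T -> {ffun 'I_(N1 + n) -> bool} -> Prop) :
  (forall g, measurable [set w | E w g]) ->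
  measurable_fun setT (fun w => bootP R N1 n (E w)).
Proof.
move=> mE; under eq_fun do rewrite bootP_sum.
apply: measurable_funM; last exact: measurable_cst.
apply: measurable_sum => g.
rewrite (_ : (fun x => _) = \1_[set w | E w g]); first exact: measurable_indic.
by apply/funext => w; rewrite !indicE /in_mem /mem /= /in_set.
Qed.

Lemma markov0 (F : T -> R) (eps : R) : 0 < eps -> measurable_fun setT F ->
  (forall w, 0 <= F w) ->
  (eps%:E * P [set w | (eps < F w)%R] <= \int[P]_w (F w)%:E)%E.
Proof.
move=> ep mF F0.
have mA := mset_lt F eps mF.
have -> : P [set w | (eps < F w)%R] = (\int[P]_w (\1_[set w | (eps < F w)%R] w)%:E)%E by rewrite integral_indic // setIT.
rewrite -ge0_integralZl_EFin //; last 2 first.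
- by apply/measurable_EFinP; exact: measurable_indic.
- exact: ltW.
apply: ge0_le_integral => //.
- by move=> x _; rewrite -EFinM lee_fin mulr_ge0 // ?ltW // indicE.
- by apply/measurable_EFinP; apply: measurable_funM; [exact: measurable_cst|exact: measurable_indic].
- by apply/measurable_EFinP.
move=> x _; rewrite -EFinM lee_fin indicE.
case: (boolP (x \in _)) => h /=; last by rewrite mulr0.
by rewrite mulr1; apply: ltW; move: h; rewrite inE.
Qed.
End Meas.



Lemma argmin_SSR (R : realType) (Xt : Type) (N1 : nat) (X : nat -> Xt) n
  (y : 'I_(N1 + n) -> R) (mh : Xt -> R) bs : (0 < N1)%N ->
  (forall b, SSR R Xt N1 X n y mh bs <= SSR R Xt N1 X n y mh b) ->
  bs = N1%:R^-1 * \sum_(j < N1) (y (lshift n j) - mh (X j)).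
Proof.
move=> N1p H.
apply: (@argmin_mean R N1 n (fun j => y j - mh (X j))) => // b.
have := H b; rewrite /SSR ler_pM2l ?invr_gt0 ?ltr0n ?addn_gt0 ?N1p //.
have E : forall b', \sum_(j < N1 + n) (y j - b' * Dind R N1 j - mh (X j)) ^+ 2 =
   \sum_(j < N1 + n) (y j - mh (X j) - b' * Dind R N1 j) ^+ 2.
  by move=> b'; apply: eq_bigr => j _; congr (_ ^+ 2); ring.
by rewrite !E.
Qed.

Lemma squeeze0 (R : realType) (u v : nat -> \bar R) :
  (forall n, (0 <= u n <= v n)%E) -> v n @[n --> \oo] --> 0%E ->
  u n @[n --> \oo] --> 0%E.
Proof.
move=> H hv.
apply: (@squeeze_cvge _ _ _ _ (cst 0%E) u v); last 2 first.
- exact: cvg_cst.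
- exact: hv.
by apply: nearW => n; exact: H.
Qed.

Lemma cvg3 (R : realType) (a b c : nat -> \bar R) :
  a n @[n --> \oo] --> 0%E -> b n @[n --> \oo] --> 0%E -> c n @[n --> \oo] --> 0%E ->
  (a n + b n + c n)%E @[n --> \oo] --> 0%E.
Proof.
move=> ha hb hc.
have := cvgeD _ (cvgeD _ ha hb) hc.
by rewrite !adde0; apply.
Qed.

Lemma sgnb_norm (R : realType) b : `|sgnb R b| = 1.
Proof. by case: b; rewrite /sgnb ?normrN normr1. Qed.

Lemma mem_setb (T : Type) (P : T -> bool) w : (w \in [set x | P x]) = P w.
Proof. by rewrite /in_mem /mem /= /in_set asboolb. Qed.

Lemma avg_comb (R : realType) (N1 : nat) (a b : 'I_N1 -> R) (c : R) : (0 < N1)%N ->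
  N1%:R^-1 * \sum_(j < N1) a j - c - N1%:R^-1 * \sum_(j < N1) b j =
  N1%:R^-1 * \sum_(j < N1) (a j - c - b j).
Proof.
move=> N1p.
rewrite !sumrB !mulrBr sumr_const card_ord -[c *+ N1]mulr_natl mulKf //.
by rewrite pnatr_eq0 -lt0n.
Qed.
Arguments squeeze0 {R u v}.
Arguments cvg3 {R a b c}.



Theorem proposition1 (R : realType) (d : measure_display) (T : measurableType d)
  (P : probability T R) (Xt : Type) (N1 : nat) (X : nat -> Xt) (m : Xt -> R)
  (eps Y1 : nat -> T -> R)
  (est est0 : forall n : nat, ('I_(N1 + n) -> R) -> Xt -> R)
  (c : R) (betahat : nat -> T -> R)
  (betacheck : forall n : nat, T -> {ffun 'I_(N1 + n) -> bool} -> R) :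
  (0 < N1)%N ->
  (forall k, measurable_fun setT (eps k)) ->
  (forall k, P.-integrable setT (EFin \o eps k)) ->
  (forall k, ('E_P[eps k] = 0)%E) ->
  (forall k, measurable_fun setT (Y1 k)) ->
  let Y := Ydata R T Xt N1 m X eps Y1 in
  let mhat n w := est n (Y n w) in
  let mtil n w := est0 n (Y n w) in
  let Ychk n w g := Ycheck R Xt N1 X n c (Y n w) (mtil n w) g in
  let mchk n w g := est n (Ychk n w g) in
  (forall n (j : 'I_N1), measurable_fun setT (fun w => mhat n w (X j))) ->
  (forall n (j : 'I_N1), measurable_fun setT (fun w => mtil n w (X j))) ->
  (forall n (j : 'I_N1) g, measurable_fun setT (fun w => mchk n w g (X j))) ->
  (forall n w b, SSR R Xt N1 X n (Y n w) (mhat n w) (betahat n w)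
                 <= SSR R Xt N1 X n (Y n w) (mhat n w) b) ->
  (forall n w g b, SSR R Xt N1 X n (Ychk n w g) (mchk n w g) (betacheck n w g)
                   <= SSR R Xt N1 X n (Ychk n w g) (mchk n w g) b) ->
  let W n w g := betacheck n w g - c
     - N1%:R^-1 * \sum_(j < N1)
         sgnb R (g (lshift n j)) * (tau R T Xt m X eps Y1 j w + eps j w - c) in
  (* (A1) *)
  cvg_prob0 P (fun n w => maxJ1 R N1 (fun j => `|mhat n w (X j) - m (X j)|)) ->
  cvg_prob0 P (fun n w => betahat n w
                 - N1%:R^-1 * \sum_(j < N1) (tau R T Xt m X eps Y1 j w + eps j w))
  /\
  ((* (A2) *)
   cvg_prob0 P (fun n w => maxJ1 R N1 (fun j => `|mhat n w (X j) - mtil n w (X j)|)) ->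
   (* (A3) *)
   (forall delta : R, 0 < delta ->
      jointP P N1 n
        (fun w g => delta < maxJ1 R N1 (fun j => `|mtil n w (X j) - mchk n w g (X j)|))
      @[n --> \oo] --> 0%E) ->
   (* unconditional convergence in probability *)
   (forall delta : R, 0 < delta ->
      jointP P N1 n (fun w g => delta < `|W n w g|) @[n --> \oo] --> 0%E)
   /\
   (* conditional on the data *)
   (forall delta : R, 0 < delta ->
      cvg_prob0 P (fun n w => bootP R N1 n (fun g => delta < `|W n w g|)))).
Proof.
move=> N1p meps ieps Eeps mY1 Y mhat mtil Ychk mchk mmhat mmtil mmchk Hbh Hbc W hA1.
have Yl : forall n w (j : 'I_N1), Y n w (lshift n j) = Y1 j w.
  move=> n w j; rewrite /Y /Ydata /Yobs /=. rewrite Dind_l. ring.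
have mA1 : forall n, measurable_fun setT
    (fun w => maxJ1 R N1 (fun j => `|mhat n w (X j) - m (X j)|)).
  move=> n; apply: (measurable_maxJ1 N1 (fun w j => `|mhat n w (X j) - m (X j)|)) => j.
  apply: measurableT_comp; first exact: normr_measurable.
  by apply: measurable_funB; [exact: mmhat|exact: measurable_cst].
have eZ : forall n w, betahat n w
     - N1%:R^-1 * \sum_(j < N1) (tau R T Xt m X eps Y1 j w + eps j w)
   = N1%:R^-1 * \sum_(j < N1) (m (X j) - mhat n w (X j)).
  move=> n w.
  rewrite (argmin_SSR _ _ _ _ _ _ _ _ N1p (Hbh n w)) -mulrBr -sumrB.
  congr (_ * _); apply: eq_bigr => j _; rewrite Yl /tau /Y0; ring.
split.
  move=> del delp.
  apply: squeeze0 (hA1 del delp) => n.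
  apply/andP; split; first exact: measure_ge0.
  apply: le_measure; rewrite ?inE.
  - under eq_set do rewrite eZ.
    apply: mset_lt; apply: measurableT_comp; first exact: normr_measurable.
    apply: measurable_funM; first exact: measurable_cst.
    apply: measurable_sum => j.
    by apply: measurable_funB; [exact: measurable_cst|exact: mmhat].
  - by apply: mset_lt; apply: measurableT_comp; first exact: normr_measurable.
  move=> w /=; rewrite eZ => h; apply: (lt_le_trans h).
  rewrite [X in _ <= X]ger0_norm ?maxJ1_ge0 //.
  apply: avg_bound => // j; rewrite distrC.
  exact: maxJ1_ge.
move=> hA2 hA3.
have mA2 : forall n, measurable_fun setT
    (fun w => maxJ1 R N1 (fun j => `|mhat n w (X j) - mtil n w (X j)|)).
  move=> n; apply: (measurable_maxJ1 N1 (fun w j => `|mhat n w (X j) - mtil n w (X j)|)) => j.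
  apply: measurableT_comp; first exact: normr_measurable.
  by apply: measurable_funB; [exact: mmhat|exact: mmtil].
have mA3 : forall n g, measurable_fun setT
    (fun w => maxJ1 R N1 (fun j => `|mtil n w (X j) - mchk n w g (X j)|)).
  move=> n g; apply: (measurable_maxJ1 N1 (fun w j => `|mtil n w (X j) - mchk n w g (X j)|)) => j.
  apply: measurableT_comp; first exact: normr_measurable.
  by apply: measurable_funB; [exact: mmtil|exact: mmchk].
have eW : forall n w g, W n w g = N1%:R^-1 * \sum_(j < N1)
    ((mtil n w (X j) - mchk n w g (X j))
     + sgnb R (g (lshift n j)) * (m (X j) - mtil n w (X j))).
  move=> n w g.
  rewrite /W (argmin_SSR _ _ _ _ _ _ _ _ N1p (Hbc n w g)) avg_comb //.
  congr (_ * _); apply: eq_bigr => j _.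
  rewrite /Ychk /Ycheck Yl /tau /Y0 /=. rewrite Dind_l. ring.
have bW : forall n w g, `|W n w g| <=
    maxJ1 R N1 (fun j => `|mtil n w (X j) - mchk n w g (X j)|)
    + maxJ1 R N1 (fun j => `|mhat n w (X j) - m (X j)|)
    + maxJ1 R N1 (fun j => `|mhat n w (X j) - mtil n w (X j)|).
  move=> n w g; rewrite eW; apply: avg_bound => // j.
  have h3 := maxJ1_ge R N1 (fun j => `|mtil n w (X j) - mchk n w g (X j)|) j.
  have h1 := maxJ1_ge R N1 (fun j => `|mhat n w (X j) - m (X j)|) j.
  have h2 := maxJ1_ge R N1 (fun j => `|mhat n w (X j) - mtil n w (X j)|) j.
  rewrite /= in h1 h2 h3.
  apply: (le_trans (ler_normD _ _)); rewrite normrM sgnb_norm mul1r.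
  have : `|m (X j) - mtil n w (X j)| <= `|mhat n w (X j) - m (X j)| + `|mhat n w (X j) - mtil n w (X j)|.
    rewrite (distrC (mhat n w (X j))).
    have -> : m (X j) - mtil n w (X j) = (m (X j) - mhat n w (X j)) + (mhat n w (X j) - mtil n w (X j)) by ring.
    exact: ler_normD.
  lra.
set A1f := fun n w => maxJ1 R N1 (fun j => `|mhat n w (X j) - m (X j)|).
set A2f := fun n w => maxJ1 R N1 (fun j => `|mhat n w (X j) - mtil n w (X j)|).
set A3f := fun n w g => maxJ1 R N1 (fun j => `|mtil n w (X j) - mchk n w g (X j)|).
have key : forall del, 0 < del ->
  [/\ forall n, measurable_fun setT (fun w => bootP R N1 n (fun g => del < `|W n w g|)),
      forall n, measurable_fun setT (fun w => bootP R N1 n (fun g => del / 3 < A3f n w g)),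
      forall n, measurable [set w | del / 3 < `|A1f n w|],
      forall n, measurable [set w | del / 3 < `|A2f n w|] &
      forall n w, bootP R N1 n (fun g => del < `|W n w g|) <=
        bootP R N1 n (fun g => del / 3 < A3f n w g)
        + \1_[set w | del / 3 < `|A1f n w|] w + \1_[set w | del / 3 < `|A2f n w|] w].
  move=> del delp; split.
  - move=> n; apply: measurable_bootP => g.
    under eq_set do rewrite eW.
    apply: mset_lt; apply: measurableT_comp; first exact: normr_measurable.
    apply: measurable_funM; first exact: measurable_cst.
    apply: measurable_sum => j.
    apply: measurable_funD; first by apply: measurable_funB; [exact: mmtil|exact: mmchk].
    apply: measurable_funM; first exact: measurable_cst.
    by apply: measurable_funB; [exact: measurable_cst|exact: mmtil].
  - move=> n; apply: measurable_bootP => g.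
    by apply: mset_lt; apply: mA3.
  - move=> n; apply: mset_lt; apply: measurableT_comp; first exact: normr_measurable.
    exact: mA1.
  - move=> n; apply: mset_lt; apply: measurableT_comp; first exact: normr_measurable.
    exact: mA2.
  move=> n w; rewrite !indicE !mem_setb -addrA.
  apply: (le_trans (bootP_sub R N1 n _ (fun g => del / 3 < A3f n w g) ((del / 3 < `|A1f n w|) || (del / 3 < `|A2f n w|)) _)).
    move=> g hg; have hb := bW n w g.
    have a10 : 0 <= A1f n w by exact: maxJ1_ge0.
    have a20 : 0 <= A2f n w by exact: maxJ1_ge0.
    rewrite !ger0_norm //.
    case: (ltP (del / 3) (A3f n w g)) => h3; first by left.
    right; case: (ltP (del / 3) (A1f n w)) => h1 //=.
    apply/idP; rewrite /A1f /A2f /A3f /= in h1 h3 hb *; lra.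
  rewrite lerD2l.
  by case: (_ < _); case: (_ < _); rewrite /= ?addr0 ?add0r ?ler01 ?lexx // lerDl ler01.
have e3 : forall del : R, 0 < del -> 0 < del / 3.
  by move=> del delp; rewrite divr_gt0 // ltr0n.
split.
  move=> del delp.
  have e3p := e3 del delp.
  case: (key del delp) => mB mB3 mS1 mS2 pw.
  have hv := cvg3 (hA3 _ e3p) (hA1 _ e3p) (hA2 _ e3p). apply: (squeeze0 _ hv) => n.
  apply/andP; split.
    by apply: integral_ge0 => w _; rewrite lee_fin bootP_ge0.
  have H : (\int[P]_w (bootP R N1 n (fun g => del < `|W n w g|))%:E <=
     jointP P N1 n (fun w g => (del / 3 < A3f n w g)%R)
     + P [set w | (del / 3 < `|A1f n w|)%R] + P [set w | (del / 3 < `|A2f n w|)%R])%E.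
    rewrite /jointP.
    have -> : P [set w | (del / 3 < `|A1f n w|)%R] =
      (\int[P]_w (\1_[set w | (del / 3 < `|A1f n w|)%R] w)%:E)%E by rewrite integral_indic // setIT.
    have -> : P [set w | (del / 3 < `|A2f n w|)%R] =
      (\int[P]_w (\1_[set w | (del / 3 < `|A2f n w|)%R] w)%:E)%E by rewrite integral_indic // setIT.
    rewrite -ge0_integralD //; last 3 first.
    - by move=> x _; rewrite lee_fin bootP_ge0.
    - by apply/measurable_EFinP; exact: mB3.
    - by apply/measurable_EFinP; exact: measurable_indic.
    rewrite -ge0_integralD //; last 3 first.
    - by move=> x _; rewrite adde_ge0 // lee_fin ?bootP_ge0 ?indicE.
    - by apply: emeasurable_funD; apply/measurable_EFinP; [exact: mB3|exact: measurable_indic].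
    - by apply/measurable_EFinP; exact: measurable_indic.
    apply: ge0_le_integral => //.
    - by move=> x _; rewrite lee_fin bootP_ge0.
    - by apply/measurable_EFinP; exact: mB.
    - apply: emeasurable_funD; last by apply/measurable_EFinP; exact: measurable_indic.
      by apply: emeasurable_funD; apply/measurable_EFinP; [exact: mB3|exact: measurable_indic].
    by move=> x _; rewrite -!EFinD lee_fin pw.
  exact: H.
move=> del delp ep epsp.
have e3p := e3 del delp.
case: (key del delp) => mB mB3 mS1 mS2 pw.
have hJ := cvgeZl (y := (ep^-1)%:E) (fin_numE _) (hA3 _ e3p).
rewrite mule0 in hJ.
have hv := cvg3 hJ (hA1 _ e3p) (hA2 _ e3p).
apply: (squeeze0 _ hv) => n.
apply/andP; split; first exact: measure_ge0.
set S1 := [set w | del / 3 < `|A1f n w|].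
set S2 := [set w | del / 3 < `|A2f n w|].
set S0 := [set w | ep < bootP R N1 n (fun g => del / 3 < A3f n w g)].
have mS0 : measurable S0 by apply: mset_lt; exact: mB3.
have H : (P [set w | (ep < `|bootP R N1 n (fun g => del < `|W n w g|)|)%R] <=
    (ep^-1)%:E * jointP P N1 n (fun w g => (del / 3 < A3f n w g)%R) + P S1 + P S2)%E.
  apply: (@le_trans _ _ (P (S0 `|` S1 `|` S2))).
    apply: le_measure; rewrite ?inE.
    - apply: mset_lt; apply: measurableT_comp; first exact: normr_measurable.
      exact: mB.
    - apply: measurableU; [apply: measurableU; [exact: mS0|exact: mS1]|exact: mS2].
    move=> w /= h; rewrite ger0_norm in h; last exact: bootP_ge0.
    have := pw n w; rewrite !indicE.
    case: (boolP (w \in S1)) => h1; first by left; right; rewrite in_setE in h1.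
    case: (boolP (w \in S2)) => h2; first by right; rewrite in_setE in h2.
    rewrite /= !addr0 => hp.
    by left; left; rewrite /S0 /=; exact: (lt_le_trans h hp).
  apply: (le_trans (measureU2 _ _ _)); [apply: measurableU; [exact: mS0|exact: mS1]|exact: mS2|].
  apply: leeD2r.
  apply: (le_trans (measureU2 _ _ _)); [exact: mS0|exact: mS1|].
  apply: leeD2r.
  rewrite lee_pdivlMl //.
  apply: markov0; [exact: epsp|exact: mB3|move=> w; exact: bootP_ge0].
exact: H.
Qed.
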